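(* Let $\theta$ be a comtrace alphabet. For all $D_1,D_2\in\mathsf{CDG}(\theta)$, the composition $D_1\circledcirc D_2$ is a cd-graph over $\theta$, i.e. $D_1\circledcirc D_2\in\mathsf{CDG}(\theta)$.
   Context: So-structures: $(X,\prec,\sqsubset)$ with (S1) $\neg(\alpha\sqsubset\alpha)$; (S2) $\alpha\prec\beta\Rightarrow\alpha\sqsubset\beta$; (S3) $\alpha\sqsubset\beta\sqsubset\gamma\wedge\alpha\neq\gamma\Rightarrow\alpha\sqsubset\gamma$; (S4) $(\alpha\sqsubset\beta\prec\gamma)\vee(\alpha\prec\beta\sqsubset\gamma)\Rightarrow\alpha\prec\gamma$. $\lozenge$-closure: $(X,R_1,R_2)^\lozenge:=(X,(R_1\cup R_2)^*\circ R_1\circ(R_1\cup R_2)^*,(R_1\cup R_2)^*\setminus\mathrm{id}_X)$ ($^*$ = reflexive transitive closure). Labeled relational structures are taken up to label-preserving isomorphism; $[\cdot]$ denotes the class. Comtrace alphabet: $\theta=(E,sim,ser)$, $E$ finite, $ser\subseteq sim\subseteq E\times E$, $sim$ irreflexive symmetric. Cd-graph over $\theta$: the class of a finite labeled relational structure $(X,\to,\dashrightarrow,\lambda)$, $\lambda:X\to E$, with $\to,\dashrightarrow$ irreflexive, $(X,\to,\dashrightarrow)^\lozenge$ an so-structure, and for all $\alpha\neq\beta$: (CD1) $(\lambda\alpha,\lambda\beta)\notin sim\Rightarrow\alpha\to\beta\vee\beta\to\alpha$; (CD2) $(\lambda\alpha,\lambda\beta)\notin ser\Rightarrow\alpha\to\beta\vee\beta\dashrightarrow\alpha$;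 (CD3) $\alpha\to\beta\Rightarrow(\lambda\alpha,\lambda\beta)\notin ser$; (CD4) $\alpha\dashrightarrow\beta\Rightarrow(\lambda\beta,\lambda\alpha)\notin ser$. $\mathsf{CDG}(\theta)$ is the set of these. Composition: for $D_i=[X_i,\to_i,\dashrightarrow_i,\lambda_i]$, $X_1,X_2$ disjoint, $D_1\circledcirc D_2:=[X_1\uplus X_2,\to,\dashrightarrow,\lambda_1\uplus\lambda_2]$ with $\to=\to_1\cup\to_2\cup\{(\alpha,\beta)\in X_1\times X_2:(\lambda\alpha,\lambda\beta)\notin ser\}$ and $\dashrightarrow=\dashrightarrow_1\cup\dashrightarrow_2\cup\{(\alpha,\beta)\in X_1\times X_2:(\lambda\beta,\lambda\alpha)\notin ser\}$. *)

(* Defs.v *)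
From mathcomp Require Import all_boot.
Set Implicit Arguments. Unset Strict Implicit. Unset Printing Implicit Defensive.

Definition comtrace_alphabet (E : finType) (sim ser : rel E) : Prop :=
  (forall a b, ser a b -> sim a b) /\ irreflexive sim /\ symmetric sim.

Definition so_structure (X : Type) (prec sq : X -> X -> Prop) : Prop :=
  (forall a, ~ sq a a) /\
  (forall a b, prec a b -> sq a b) /\
  (forall a b c, sq a b -> sq b c -> a <> c -> sq a c) /\
  (forall a b c, (sq a b /\ prec b c) \/ (prec a b /\ sq b c) -> prec a c).

Definition star_union (X : finType) (R1 R2 : rel X) : rel X :=
  connect [rel x y | R1 x y || R2 x y].

Definition diamond_prec (X : finType) (R1 R2 : rel X) (x y : X) : Prop :=
  exists z w, star_union R1 R2 x z /\ R1 z w /\ star_union R1 R2 w y.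

Definition diamond_sq (X : finType) (R1 R2 : rel X) (x y : X) : Prop :=
  star_union R1 R2 x y /\ x <> y.

Record lrs (E : Type) := LRS {
  carrier : finType;
  arr : rel carrier;
  darr : rel carrier;
  lab : carrier -> E }.

(* (a representative of) a cd-graph over theta = (E, sim, ser) *)
Definition is_cdg (E : finType) (sim ser : rel E) (D : lrs E) : Prop :=
  irreflexive (@arr E D) /\ irreflexive (@darr E D) /\
  so_structure (diamond_prec (@arr E D) (@darr E D))
               (diamond_sq (@arr E D) (@darr E D)) /\
  (forall a b : carrier D, a <> b ->
     (~~ sim (lab a) (lab b) -> arr a b \/ arr b a) /\
     (~~ ser (lab a) (lab b) -> arr a b \/ darr b a) /\
     (arr a b -> ~~ ser (lab a) (lab b)) /\
     (darr a b -> ~~ ser (lab b) (lab a))).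

(* Composition D1 ⊚ D2; the disjoint union X1 ⊎ X2 is the sum type. *)
Section Compose.
Variables (E : finType) (ser : rel E) (D1 D2 : lrs E).

Definition comp_lab (u : (carrier D1 + carrier D2)%type) : E :=
  match u with inl a => lab a | inr b => lab b end.

Definition comp_arr : rel (carrier D1 + carrier D2)%type :=
  fun u v => match u, v with
  | inl a, inl b => arr a b
  | inr a, inr b => arr a b
  | inl a, inr b => ~~ ser (lab a) (lab b)
  | inr _, inl _ => false
  end.

Definition comp_darr : rel (carrier D1 + carrier D2)%type :=
  fun u v => match u, v with
  | inl a, inl b => darr a b
  | inr a, inr b => darr a b
  | inl a, inr b => ~~ ser (lab b) (lab a)
  | inr _, inl _ => false
  end.

Definition compose : lrs E :=
  @LRS E (carrier D1 + carrier D2)%type comp_arr comp_darr comp_lab.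
End Compose.

(* Main.v *)
Require Import Defs.
From mathcomp Require Import all_boot.

Lemma so_of_acyclic (X : finType) (R1 R2 : rel X) :
  (forall x, ~ diamond_prec R1 R2 x x) ->
  so_structure (diamond_prec R1 R2) (diamond_sq R1 R2).
Proof.
move=> Hac.
have pstar : forall x y, diamond_prec R1 R2 x y -> star_union R1 R2 x y.
  move=> x y [z [w [Hxz [Hzw Hwy]]]].
  apply: connect_trans Hxz _; apply: connect_trans Hwy.
  by apply: connect1; rewrite /= Hzw.
split; first by move=> a [_ H].
split.
  move=> a b H; split; first exact: pstar.
  by move=> E; subst b; exact: (Hac a).
split.
  move=> a b c [H1 _] [H2 _] Hne; split=> //; exact: connect_trans H1 H2.
move=> a b c [[[Hab _] [z [w [Hbz [Hzw Hwc]]]]] | [[z [w [Haz [Hzw Hwb]]]] [Hbc _]]].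
  exists z, w; split; first exact: connect_trans Hab Hbz. by split.
exists z, w; split=> //; split=> //; exact: connect_trans Hwb Hbc.
Qed.

Lemma acyclic_of_cdg (E : finType) (sim ser : rel E) (D : lrs E) :
  is_cdg sim ser D -> forall x, ~ diamond_prec (@arr E D) (@darr E D) x x.
Proof.
move=> [_ [_ [[_ [S2 _]] _]]] x H.
by case: (S2 _ _ H) => _ /(_ erefl).
Qed.

Section Comp.
Variables (E : finType) (ser : rel E) (D1 D2 : lrs E).
Let e := [rel x y : (carrier D1 + carrier D2)%type | @comp_arr E ser D1 D2 x y || @comp_darr E ser D1 D2 x y].

Lemma L1 p : forall x b, path e x p -> last x p = inl b ->
  exists a, x = inl a /\ star_union (@arr E D1) (@darr E D1) a b.
Proof.
elim: p => [|y p IH] x b /=.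
  by move=> _ ->; exists b; split=> //; exact: connect0.
move=> /andP [Hxy Hp] Hl.
have [a2 [Ey Ha2]] := IH _ _ Hp Hl; subst y.
case: x Hxy => [a|a] //= Hxy.
exists a; split=> //; apply: connect_trans Ha2; exact: connect1.
Qed.

Lemma L2 p : forall a, path e (inr a) p ->
  exists b, last (inr a) p = inr b /\ star_union (@arr E D2) (@darr E D2) a b.
Proof.
elim: p => [|y p IH] a /=.
  by move=> _; exists a; split=> //; exact: connect0.
move=> /andP [Hxy Hp].
case: y Hxy Hp => [a'|a'] //= Hxy Hp.
have [b [Hl Hb]] := IH _ Hp.
exists b; split=> //; apply: connect_trans Hb; exact: connect1.
Qed.

Lemma starL x b : connect e x (inl b) ->
  exists a, x = inl a /\ star_union (@arr E D1) (@darr E D1) a b.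
Proof. move=> /connectP [p Hp Hl]; exact: (L1 _ _ _ Hp (esym Hl)). Qed.

Lemma starR a y : connect e (inr a) y ->
  exists b, y = inr b /\ star_union (@arr E D2) (@darr E D2) a b.
Proof.
move=> /connectP [p Hp Hl]; have [b [H1 H2]] := L2 _ _ Hp.
by exists b; rewrite Hl H1.
Qed.
End Comp.

Theorem mainTheorem16 (E : finType) (sim ser : rel E)
  (theta : comtrace_alphabet sim ser) (D1 D2 : lrs E) :
  is_cdg sim ser D1 -> is_cdg sim ser D2 -> is_cdg sim ser (compose ser D1 D2).
Proof.
move=> H1 H2.
have A1 := acyclic_of_cdg _ _ _ _ H1; have A2 := acyclic_of_cdg _ _ _ _ H2.
case: H1 => [I1 [J1 [_ C1]]]; case: H2 => [I2 [J2 [_ C2]]].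
case: theta => [Hss [Hirr Hsym]].
split; first by case.
split; first by case.
split.
  apply: so_of_acyclic => -[a|a] [z [w [Hz [Hzw Hw]]]].
  - have [w' [Ew Hw']] := starL _ _ _ _ _ _ Hw; subst w.
    case: z Hz Hzw => [z'|z'] //= Hz Hzw.
    have [a' [Ea Hz']] := starL _ _ _ _ _ _ Hz; case: Ea => <- in Hz'.
    by apply: (A1 a); exists z', w'.
  - have [z' [Ez Hz']] := starR _ _ _ _ _ _ Hz; subst z.
    case: w Hw Hzw => [w'|w'] //= Hw Hzw.
    have [b [Eb Hb]] := starR _ _ _ _ _ _ Hw; case: Eb => <- in Hb.
    by apply: (A2 a); exists z', w'.
move=> [a|a] [b|b] Hne /=.
- by apply: C1 => E0; apply: Hne; rewrite E0.
- split; first by move=> Hs; left; apply/negP => /Hss; exact/negP.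
  split; first by left.
  by split.
- split; first by move=> Hs; right; apply/negP => /Hss; rewrite Hsym; exact/negP.
  split; first by right.
  by split.
- by apply: C2 => E0; apply: Hne; rewrite E0.
Qed.
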